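(* Let $\phi$ be a formula and suppose $\xi\models_{\mathbf t}\phi$ for some model $\xi$ and time instant $\mathbf t$. Then there exist a model $\eta$ and positive integers $k$, $m$, and $l_i,n_i$ for $i=1,\dots,k+m$, such that: (1) $\eta\models_{\langle 0,0\rangle}\phi$; (2) $\eta(i,j,p)=\eta(i+m,j,p)$ for all $i>k$, all $j\in\omega$ and all $p\in Var$; (3) $\eta(i,j,p)=\eta(i,j+n_i,p)$ for all $i\le k+m$, all $j>l_i$ and all $p\in Var$; (4) $\max(m,n_1,\dots,n_m)\le\mathrm{length}(\phi)\cdot 2^{\mathrm{length}(\phi)}$; (5) $\max(k,l_1,\dots,l_{k+m})\le 2^{\mathrm{length}(\phi)}$.
   Context: Fix $Var=\{p_n : n\in\omega\}$. The formulas of $L([1],[\omega],\mathtt u,\mathtt U)$ form the smallest set containing $Var$ and closed under $\neg\phi$, $[1]\phi$, $[\omega]\phi$, $(\phi\wedge\psi)$, $(\phi\,\mathtt u\,\psi)$, $(\phi\,\mathtt U\,\psi)$; $\mathrm{length}(\phi)$ is the number of symbols in $\phi$. Time instants are pairs $\mathbf t=\langle t_1,t_2\rangle\in\omega\times\omega$ ordered lexicographically. A model is a function $\xi:\omega\times\omega\times Var\to\{0,1\}$. Satisfaction: $\xi\models_{\mathbf r}p$ iff $\xi(r_1,r_2,p)=1$; $\neg,\wedge$ classical; $\xi\models_{\mathbf r}[1]\phi$ iff $\xi\models_{\langle r_1,r_2+1\rangle}\phi$; $\xi\models_{\mathbf r}[\omega]\phi$ iff $\xi\models_{\langle r_1+1,0\rangle}\phi$;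 $\xi\models_{\mathbf r}\phi\,\mathtt u\,\psi$ iff there is $k\in\omega$ with $\xi\models_{\langle r_1,r_2+k\rangle}\psi$ and $\xi\models_{\langle r_1,r_2+i\rangle}\phi$ for all $0\le i<k$; $\xi\models_{\mathbf r}\phi\,\mathtt U\,\psi$ iff there is $\mathbf s\ge\mathbf r$ with $\xi\models_{\mathbf s}\psi$ and $\xi\models_{\mathbf t}\phi$ for all $\mathbf r\le\mathbf t<\mathbf s$. *)

(* Defs.v *)
From Stdlib Require Import Arith.

(* Formulas of L([1],[omega],u,U); propositional variable p_n is [Var n]. *)
Inductive formula : Type :=
| Var : nat -> formula
| Neg : formula -> formula
| Next1 : formula -> formula
| NextOmega : formula -> formula
| And : formula -> formula -> formula
| Until1 : formula -> formula -> formula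
| UntilOmega : formula -> formula -> formula.

(* Number of symbols: p_n, ~, [1], [omega] each count as one symbol;
   binary formulas contribute two parentheses and the connective. *)
Fixpoint length (f : formula) : nat :=
  match f with
  | Var _ => 1
  | Neg a => S (length a)
  | Next1 a => S (length a)
  | NextOmega a => S (length a)
  | And a b => length a + length b + 3
  | Until1 a b => length a + length b + 3
  | UntilOmega a b => length a + length b + 3
  end.

(* A model: xi t1 t2 n is the truth value of p_n at instant <t1,t2>. *)
Definition model := nat -> nat -> nat -> bool.

Definition lex_le (r1 r2 s1 s2 : nat) : Prop :=
  r1 < s1 \/ (r1 = s1 /\ r2 <= s2).

Fixpoint sat (xi : model) (r1 r2 : nat) (f : formula) : Prop :=
  match f with
  | Var n => xi r1 r2 n = true
  | Neg a => ~ sat xi r1 r2 a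
  | Next1 a => sat xi r1 (S r2) a
  | NextOmega a => sat xi (S r1) 0 a
  | And a b => sat xi r1 r2 a /\ sat xi r1 r2 b
  | Until1 a b => exists k, sat xi r1 (r2 + k) b /\
                    forall i, i < k -> sat xi r1 (r2 + i) a
  | UntilOmega a b => exists s1 s2, lex_le r1 r2 s1 s2 /\ sat xi s1 s2 b /\
                    forall t1 t2, lex_le r1 r2 t1 t2 ->
                      (t1 < s1 \/ (t1 = s1 /\ t2 < s2)) -> sat xi t1 t2 a
  end.

(* Main.v *)
Require Import Defs.
From Stdlib Require Import Arith Lia List Classical ClassicalEpsilon IndefiniteDescription.
Import ListNotations.
Set Warnings "-deprecated".


Lemma pigeon (h : nat -> nat) n N :
  (forall i, i < n -> h i < N) ->
  (forall i j, i < n -> j < n -> h i = h j -> i = j) -> n <= N.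
Proof.
  intros Hb Hi.
  assert (Hnd : NoDup (map h (seq 0 n))).
  { apply (NoDup_nth _ (h 0)). rewrite length_map, length_seq. intros i j Hi' Hj' E.
    rewrite !map_nth, !seq_nth in E by lia. apply Hi; auto. }
  assert (HH : length (map h (seq 0 n)) <= length (seq 0 N)).
  2:{ rewrite length_map, length_seq, length_seq in HH. apply HH. }
  apply NoDup_incl_length; auto.
  intros x Hx. apply in_map_iff in Hx. destruct Hx as [i [<- Hi']].
  apply in_seq in Hi'. apply in_seq. specialize (Hb i). lia.
Qed.

Lemma recur (f : nat -> nat) N (Hf : forall x, f x < N) :
  exists J, 1 <= J /\ forall x, J <= x -> forall y, exists z, y < z /\ f z = f x.
Proof.
  assert (G : forall L, exists J, 1 <= J /\ forall x, J <= x -> In (f x) L ->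
            forall y, exists z, y < z /\ f z = f x).
  { induction L as [|c L IH].
    - exists 1. split; [lia|]. intros x _ [].
    - destruct IH as [J [HJ1 HJ]].
      destruct (classic (forall y, exists z, y < z /\ f z = c)) as [Hc|Hc].
      + exists J. split; auto. intros x Hx [E|Hin] y.
        * rewrite <- E. apply Hc.
        * apply HJ; auto.
      + apply not_all_ex_not in Hc. destruct Hc as [y0 Hy0].
        exists (Nat.max J (S y0)). split; [lia|]. intros x Hx [E|Hin] y.
        * exfalso. apply Hy0. exists x. split; [lia|auto].
        * apply HJ; auto. lia. }
  destruct (G (seq 0 N)) as [J [HJ1 HJ]]. exists J. split; auto.
  intros x Hx. apply HJ; auto. apply in_seq. specialize (Hf x). lia.
Qed.

Definition pvalid (f : nat -> nat) (p : nat -> nat) (n : nat) :=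
  forall i, S i < n -> f (p (S i)) = f (S (p i)).

Lemma compress (f : nat -> nat) N (Hf : forall x, f x < N) a e :
  exists p n, 1 <= n <= N /\ p 0 = a /\ pvalid f p n /\
    (forall i, i < n -> a <= p i <= a + e) /\ f (S (p (n - 1))) = f (S (a + e)).
Proof.
  assert (G : exists p n, 1 <= n /\ p 0 = a /\ pvalid f p n /\
    (forall i, i < n -> a <= p i <= a + e) /\ f (S (p (n - 1))) = f (S (a + e)) /\
    (forall i j, i < n -> j < n -> f (S (p i)) = f (S (p j)) -> i = j)).
  { induction e as [|e IH].
    - exists (fun _ => a), 1. split; [lia|]. split; [reflexivity|]. split.
      { intros i Hi; lia. } split. { intros i Hi; lia. } split.
      { f_equal. lia. } intros i j Hi Hj _. lia.
    - destruct IH as [p [n [Hn [Hp0 [Hv [Hr [Hl Hinj]]]]]]].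
      destruct (classic (exists i, i < n /\ f (S (p i)) = f (S (a + S e)))) as [[i [Hi Ei]]|Hno].
      + exists p, (S i). unfold pvalid in *.
        split; [lia|]. split; [auto|]. split.
        { intros j Hj. apply Hv. lia. } split.
        { intros j Hj. specialize (Hr j ltac:(lia)). lia. } split.
        { replace (S i - 1) with i by lia. auto. }
        intros j k Hj Hk E. apply Hinj; auto; lia.
      + exists (fun j => if j =? n then a + S e else p j), (S n). unfold pvalid in *.
        split; [lia|]. split.
        { destruct (0 =? n) eqn:E; [apply Nat.eqb_eq in E; lia|auto]. } split.
        { intros j Hj. destruct (S j =? n) eqn:E1; destruct (j =? n) eqn:E2;
            try (apply Nat.eqb_eq in E2); try (apply Nat.eqb_eq in E1); try lia.
          - replace j with (n - 1) by lia. rewrite Hl. f_equal; lia.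
          - apply Nat.eqb_neq in E1. apply Hv. lia. } split.
        { intros j Hj. destruct (j =? n) eqn:E; [lia|]. apply Nat.eqb_neq in E.
          specialize (Hr j ltac:(lia)). lia. } split.
        { replace (S n - 1) with n by lia. rewrite Nat.eqb_refl. reflexivity. }
        intros j k Hj Hk E. revert E.
        destruct (j =? n) eqn:E1; [apply Nat.eqb_eq in E1|apply Nat.eqb_neq in E1];
        (destruct (k =? n) eqn:E2; [apply Nat.eqb_eq in E2|apply Nat.eqb_neq in E2]).
        -- intros; lia.
        -- intro E; exfalso. apply Hno. exists k. split; [lia|]. congruence.
        -- intro E; exfalso. apply Hno. exists j. split; [lia|]. congruence.
        -- intro E; apply Hinj; auto; lia. }
  destruct G as [p [n [Hn [Hp0 [Hv [Hr [Hl Hinj]]]]]]].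
  exists p, n. split; [split; auto|]. 2: split; auto.
  apply (pigeon (fun i => f (S (p i)))); auto.
Qed.


Lemma loop_path (f : nat -> nat) N (Hf : forall x, f x < N) J
  (Hrec : forall x, J <= x -> forall y, exists z, y < z /\ f z = f x) x0 (Hx0 : J <= x0) :
  forall ts, (forall t, In t ts -> J <= t) -> forall cur, J <= cur ->
  exists q n, 1 <= n <= (length ts + 1) * N /\ q 0 = cur /\ pvalid f q n /\
    (forall i, i < n -> J <= q i) /\ (forall t, In t ts -> exists i, i < n /\ f (q i) = f t) /\
    f (S (q (n - 1))) = f x0.
Proof.
  induction ts as [|t ts IH]; intros Hts cur Hcur.
  - destruct (Hrec x0 Hx0 cur) as [z [Hz Ez]].
    destruct (compress f N Hf cur (z - 1 - cur)) as [p [n [Hn [Hp0 [Hv [Hr Hl]]]]]].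
    exists p, n. split; [simpl; lia|]. split; auto. split; auto. split.
    { intros i Hi. specialize (Hr i Hi). lia. } split.
    { intros t' []. }
    rewrite Hl. rewrite <- Ez. f_equal. lia.
  - assert (Ht : J <= t) by (apply Hts; left; auto).
    destruct (Hrec t Ht cur) as [z [Hz Ez]].
    destruct (compress f N Hf cur (z - 1 - cur)) as [p [n [Hn [Hp0 [Hv [Hr Hl]]]]]].
    destruct (IH (fun t' H' => Hts t' (or_intror H')) z ltac:(lia)) as
        [q [m [Hm [Hq0 [Hqv [Hqr [Hqw Hql]]]]]]].
    exists (fun i => if i <? n then p i else q (i - n)), (n + m).
    split; [simpl; nia|]. split.
    { destruct (0 <? n) eqn:E; [auto|apply Nat.ltb_ge in E; lia]. } split.
    { intros i Hi. destruct (S i <? n) eqn:E1; [apply Nat.ltb_lt in E1|apply Nat.ltb_ge in E1];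
      (destruct (i <? n) eqn:E2; [apply Nat.ltb_lt in E2|apply Nat.ltb_ge in E2]).
      - apply Hv. auto.
      - lia.
      - assert (i = n - 1) by lia. subst i. replace (S (n - 1) - n) with 0 by lia.
        rewrite Hq0, Hl. f_equal. lia.
      - replace (S i - n) with (S (i - n)) by lia. apply Hqv. lia. } split.
    { intros i Hi. destruct (i <? n) eqn:E; [apply Nat.ltb_lt in E|apply Nat.ltb_ge in E].
      - specialize (Hr i E). lia.
      - apply Hqr. lia. } split.
    { intros t' [<-|Hin].
      - exists n. split; [lia|]. rewrite Nat.ltb_irrefl, Nat.sub_diag, Hq0. auto.
      - destruct (Hqw t' Hin) as [i [Hi Ei]]. exists (n + i). split; [lia|].
        destruct (n + i <? n) eqn:E; [apply Nat.ltb_lt in E; lia|].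
        replace (n + i - n) with i by lia. auto. }
    destruct (n + m - 1 <? n) eqn:E; [apply Nat.ltb_lt in E; lia|].
    rewrite <- Hql. f_equal. f_equal. f_equal. lia.
Qed.

Section Lasso.
Variables (f : nat -> nat) (p q : nat -> nat) (nP nL : nat).
Hypotheses (HnP : 1 <= nP) (HnL : 1 <= nL) (Hpv : pvalid f p nP) (Hqv : pvalid f q nL)
  (Hj1 : f (q 0) = f (S (p (nP - 1)))) (Hj2 : f (q 0) = f (S (q (nL - 1)))).

Definition lasso b := if b <? nP then p b else q ((b - nP) mod nL).

Lemma lasso0 : lasso 0 = p 0.
Proof. unfold lasso. destruct (0 <? nP) eqn:E; [auto|apply Nat.ltb_ge in E; lia]. Qed.

Lemma lasso_step b : f (lasso (S b)) = f (S (lasso b)).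
Proof.
  unfold lasso.
  destruct (S b <? nP) eqn:E1; [apply Nat.ltb_lt in E1|apply Nat.ltb_ge in E1];
    (destruct (b <? nP) eqn:E2; [apply Nat.ltb_lt in E2|apply Nat.ltb_ge in E2]).
  - apply Hpv. auto.
  - lia.
  - assert (b = nP - 1) by lia. subst b. replace (S (nP - 1) - nP) with 0 by lia.
    rewrite Nat.mod_0_l by lia. auto.
  - replace (S b - nP) with ((b - nP) + 1) by lia.
    rewrite <- Nat.add_mod_idemp_l by lia.
    assert (Hm := Nat.mod_upper_bound (b - nP) nL ltac:(lia)).
    destruct (Nat.eq_dec ((b - nP) mod nL + 1) nL) as [Eq|Ne].
    + rewrite Eq, Nat.mod_same by lia. rewrite Hj2. f_equal. f_equal. f_equal. lia.
    + rewrite Nat.mod_small by lia. rewrite Nat.add_1_r. apply Hqv. lia.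
Qed.

Lemma lasso_per b : nP <= b -> lasso (b + nL) = lasso b.
Proof.
  intro Hb. unfold lasso.
  destruct (b + nL <? nP) eqn:E1; [apply Nat.ltb_lt in E1; lia|].
  destruct (b <? nP) eqn:E2; [apply Nat.ltb_lt in E2; lia|].
  replace (b + nL - nP) with ((b - nP) + 1 * nL) by lia. rewrite Nat.mod_add by lia. auto.
Qed.

Lemma lasso_in b : nP <= b -> exists i, i < nL /\ lasso b = q i.
Proof.
  intro Hb. unfold lasso. destruct (b <? nP) eqn:E2; [apply Nat.ltb_lt in E2; lia|].
  exists ((b - nP) mod nL). split; auto. apply Nat.mod_upper_bound. lia.
Qed.

Lemma lasso_visit b i : nP <= b -> i < nL -> exists k, lasso (b + k) = q i.
Proof.
  intros Hb Hi. set (x := b - nP).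
  exists (nL - x mod nL + i). unfold lasso.
  destruct (b + (nL - x mod nL + i) <? nP) eqn:E; [apply Nat.ltb_lt in E; lia|].
  assert (Hm := Nat.mod_upper_bound x nL ltac:(lia)).
  assert (Hd := Nat.div_mod_eq x nL).
  replace (b + (nL - x mod nL + i) - nP) with (i + (x / nL + 1) * nL) by (subst x; nia).
  rewrite Nat.mod_add by lia. rewrite Nat.mod_small by lia. auto.
Qed.
End Lasso.

Lemma targets (preds : list (nat -> Prop)) J :
  exists ts, length ts = length preds /\ (forall t, In t ts -> J <= t) /\
    forall P, In P preds -> (exists x, J <= x /\ P x) -> exists t, In t ts /\ P t.
Proof.
  induction preds as [|P0 preds IH].
  - exists []. split; auto. split; [intros t []|]. intros P [].
  - destruct IH as [ts [Hl [Hj Hw]]].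
    destruct (classic (exists x, J <= x /\ P0 x)) as [[x [Hx Px]]|Hn].
    + exists (x :: ts). split; [simpl; auto|]. split.
      { intros t [<-|Ht]; auto. }
      intros P [<-|HP] He.
      * exists x. split; [left|]; auto.
      * destruct (Hw P HP He) as [t [Ht Pt]]. exists t. split; [right|]; auto.
    + exists (J :: ts). split; [simpl; auto|]. split.
      { intros t [<-|Ht]; auto. }
      intros P [<-|HP] He.
      * contradiction.
      * destruct (Hw P HP He) as [t [Ht Pt]]. exists t. split; [right|]; auto.
Qed.

Lemma lasso_exists (f : nat -> nat) N (Hf : forall x, f x < N) (preds : list (nat -> Prop))
  (Hinv : forall P, In P preds -> forall x y, f x = f y -> P x -> P y) c0 :
  exists g nP nL J, 1 <= nP <= N /\ 1 <= nL <= (length preds + 1) * N /\ g 0 = c0 /\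
    (forall b, f (g (S b)) = f (S (g b))) /\ (forall b, nP <= b -> g (b + nL) = g b) /\
    (forall b, nP <= b -> J <= g b) /\
    (forall P, In P preds -> (exists x, J <= x /\ P x) -> forall b, nP <= b -> exists k, P (g (b + k))).
Proof.
  destruct (recur f N Hf) as [J [HJ1 Hrec]].
  destruct (targets preds J) as [ts [Htl [Htj Htw]]].
  destruct (compress f N Hf c0 (J - 1)) as [p [nP [HnP [Hp0 [Hpv [_ Hpl]]]]]].
  destruct (loop_path f N Hf J Hrec (c0 + J) ltac:(lia) ts Htj (c0 + J) ltac:(lia))
    as [q [nL [HnL [Hq0 [Hqv [Hqj [Hqw Hql]]]]]]].
  assert (Hj1 : f (q 0) = f (S (p (nP - 1)))).
  { rewrite Hpl, Hq0. f_equal. lia. }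
  assert (Hj2 : f (q 0) = f (S (q (nL - 1)))).
  { rewrite Hql, Hq0. auto. }
  exists (lasso p q nP nL), nP, nL, J.
  split; [auto|]. split; [rewrite <- Htl; auto|]. split.
  { rewrite (lasso0 f p q nP nL ltac:(lia) ltac:(lia) Hj1 Hj2). auto. } split.
  { intro b. apply (lasso_step f p q nP nL ltac:(lia) ltac:(lia) Hpv Hqv Hj1 Hj2). } split.
  { intros b Hb. apply (lasso_per f p q nP nL ltac:(lia) ltac:(lia) Hj1 Hj2); auto. } split.
  { intros b Hb. destruct (lasso_in f p q nP nL ltac:(lia) ltac:(lia) Hj1 Hj2 b Hb) as [i [Hi ->]]. auto. }
  intros P HP He b Hb.
  destruct (Htw P HP He) as [t [Ht Pt]].
  destruct (Hqw t Ht) as [i [Hi Ei]].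
  destruct (lasso_visit f p q nP nL ltac:(lia) ltac:(lia) Hj1 Hj2 b i Hb Hi) as [k Hk].
  exists k. rewrite Hk. apply (Hinv P HP t); auto.
Qed.


Fixpoint subs (f : formula) : list formula :=
  f :: match f with
       | Var _ => []
       | Neg a | Next1 a | NextOmega a => subs a
       | And a b | Until1 a b | UntilOmega a b => subs a ++ subs b
       end.

Fixpoint extras (f : formula) : list formula :=
  match f with
  | Var _ => []
  | Neg a | Next1 a | NextOmega a => extras a
  | And a b | Until1 a b => extras a ++ extras b
  | UntilOmega a b => Until1 a b :: extras a ++ extras b
  end.

Fixpoint witc (f : formula) : list (formula * bool) :=
  match f with
  | Var _ => []
  | Neg a | Next1 a | NextOmega a => witc a
  | And a b => witc a ++ witc b
  | Until1 a b => (b, true) :: witc a ++ witc b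
  | UntilOmega a b => (b, true) :: (a, false) :: witc a ++ witc b
  end.

Fixpoint nb (f : formula) : nat :=
  match f with
  | Var _ => 0
  | Neg a | Next1 a | NextOmega a => nb a
  | And a b | Until1 a b | UntilOmega a b => S (nb a + nb b)
  end.

Definition clos f := subs f ++ extras f.

Lemma len_eq f : List.length (subs f) + 2 * nb f = Defs.length f.
Proof. induction f; simpl; rewrite ?length_app; lia. Qed.

Lemma extras_len f : List.length (extras f) <= nb f.
Proof. induction f; simpl; rewrite ?length_app; lia. Qed.

Lemma witc_len f : List.length (witc f) <= 2 * nb f.
Proof. induction f; simpl; rewrite ?length_app; lia. Qed.

Lemma subs_self f : In f (subs f).
Proof. destruct f; simpl; auto. Qed.

Lemma sub_trans f g : In g (subs f) -> incl (subs g) (subs f).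
Proof.
  induction f; simpl; intros [<-|H]; try apply incl_refl; try (intros x Hx; right; apply in_or_app);
  try (apply in_app_or in H; destruct H as [H|H]);
  try (intros x Hx; right; apply IHf; auto; fail);
  try (left; apply IHf1; auto; fail); try (right; apply IHf2; auto; fail); simpl in *; try tauto.
Qed.

Ltac subkid f H := apply (sub_trans f _ H); simpl; right;
  first [ apply subs_self | apply in_or_app; left; apply subs_self | apply in_or_app; right; apply subs_self ].

Lemma wit_u f a b : In (Until1 a b) (subs f) -> In (b, true) (witc f).
Proof.
  induction f; simpl; intros [E|H]; try discriminate;
  try (inversion E; subst; left; auto; fail);
  try (apply in_app_or in H; destruct H as [H|H]); auto;
  try (right; apply in_or_app; auto; fail);
  try (right; right; apply in_or_app; auto; fail); try (apply in_or_app; auto).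
Qed.

Lemma wit_U f a b : In (UntilOmega a b) (subs f) ->
  In (b, true) (witc f) /\ In (a, false) (witc f) /\ In (Until1 a b) (extras f).
Proof.
  induction f; simpl; intros [E|H]; try discriminate;
  try (inversion E; subst; auto; fail);
  try (apply in_app_or in H; destruct H as [H|H]); auto;
  try (destruct (IHf1 H) as [? [? ?]]); try (destruct (IHf2 H) as [? [? ?]]);
  repeat split; try (right; right; apply in_or_app; auto; fail);
  try (right; apply in_or_app; auto; fail); try (apply in_or_app; auto; fail).
Qed.

Lemma witc_sub f ps : In ps (witc f) -> In (fst ps) (subs f).
Proof.
  induction f; simpl; intro H.
  - tauto.
  - right; auto.
  - right; auto.
  - right; auto.
  - apply in_app_or in H; destruct H as [H|H]; right; apply in_or_app; auto.
  - destruct H as [<-|H]; [right; apply in_or_app; right; apply subs_self|].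
    apply in_app_or in H; destruct H as [H|H]; right; apply in_or_app; auto.
  - destruct H as [<-|H]; [right; apply in_or_app; right; apply subs_self|].
    destruct H as [<-|H]; [right; apply in_or_app; left; apply subs_self|].
    apply in_app_or in H; destruct H as [H|H]; right; apply in_or_app; auto.
Qed.

Lemma extras_sub f g : In g (extras f) -> exists a b, g = Until1 a b /\ In (UntilOmega a b) (subs f).
Proof.
  induction f; simpl; intro H.
  - tauto.
  - destruct (IHf H) as [a [b [-> Hs]]]; exists a, b; auto.
  - destruct (IHf H) as [a [b [-> Hs]]]; exists a, b; auto.
  - destruct (IHf H) as [a [b [-> Hs]]]; exists a, b; auto.
  - apply in_app_or in H; destruct H as [H|H];
    [destruct (IHf1 H) as [a [b [-> Hs]]] | destruct (IHf2 H) as [a [b [-> Hs]]]];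
    exists a, b; split; auto; right; apply in_or_app; auto.
  - apply in_app_or in H; destruct H as [H|H];
    [destruct (IHf1 H) as [a [b [-> Hs]]] | destruct (IHf2 H) as [a [b [-> Hs]]]];
    exists a, b; split; auto; right; apply in_or_app; auto.
  - destruct H as [<-|H]; [exists f1, f2; auto|].
    apply in_app_or in H; destruct H as [H|H];
    [destruct (IHf1 H) as [a [b [-> Hs]]] | destruct (IHf2 H) as [a [b [-> Hs]]]];
    exists a, b; split; auto; right; apply in_or_app; auto.
Qed.

Lemma clos_u f a b : In (Until1 a b) (clos f) -> In (b, true) (witc f).
Proof.
  unfold clos. intro H. apply in_app_or in H. destruct H as [H|H].
  - eapply wit_u; eauto.
  - destruct (extras_sub f _ H) as [a' [b' [E Hs]]]. inversion E; subst.
    apply (wit_U f a' b' Hs).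
Qed.


Lemma u_unfold m r c a b :
  sat m r c (Until1 a b) <-> sat m r c b \/ (sat m r c a /\ sat m r (S c) (Until1 a b)).
Proof.
  cbn [sat]. split.
  - intros [k [Hb Ha]]. destruct k as [|k].
    + left. rewrite Nat.add_0_r in Hb. auto.
    + right. split.
      * specialize (Ha 0 ltac:(lia)). rewrite Nat.add_0_r in Ha. auto.
      * exists k. split; [replace (S c + k) with (c + S k) by lia; auto|].
        intros i Hi. replace (S c + i) with (c + S i) by lia. apply Ha. lia.
  - intros [Hb|[Ha [k [Hb Hk]]]].
    + exists 0. rewrite Nat.add_0_r. split; auto. intros; lia.
    + exists (S k). split; [replace (c + S k) with (S c + k) by lia; auto|].
      intros i Hi. destruct i as [|i]; [rewrite Nat.add_0_r; auto|].
      replace (c + S i) with (S c + i) by lia. apply Hk. lia.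
Qed.

Lemma U_unfold m r c a b :
  sat m r c (UntilOmega a b) <-> sat m r c b \/ (sat m r c a /\ sat m r (S c) (UntilOmega a b)).
Proof.
  cbn [sat]. unfold lex_le. split.
  - intros [s1 [s2 [Hle [Hb Ha]]]].
    destruct (classic (s1 = r /\ s2 = c)) as [[-> ->]|Hne].
    + left; auto.
    + right. split.
      * apply Ha; lia.
      * exists s1, s2. split; [lia|]. split; auto. intros t1 t2 H1 H2. apply Ha; lia.
  - intros [Hb|[Ha [s1 [s2 [Hle [Hb Hs]]]]]].
    + exists r, c. split; [lia|]. split; auto. intros; lia.
    + exists s1, s2. split; [lia|]. split; auto. intros t1 t2 H1 H2.
      destruct (classic (t1 = r /\ t2 = c)) as [[-> ->]|Hne]; auto.
      apply Hs; lia.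
Qed.

Definition bsat m r c f : bool := if excluded_middle_informative (sat m r c f) then true else false.

Fixpoint enc (l : list bool) : nat :=
  match l with [] => 0 | x :: l => (if x then 1 else 0) + 2 * enc l end.

Lemma enc_lt l : enc l < 2 ^ List.length l.
Proof. induction l as [|x l IH]; simpl; [lia|]. destruct x; lia. Qed.

Lemma enc_inj l1 : forall l2, List.length l1 = List.length l2 -> enc l1 = enc l2 -> l1 = l2.
Proof.
  induction l1 as [|x l1 IH]; intros [|y l2] Hl He; simpl in *; try lia; auto.
  assert (x = y /\ enc l1 = enc l2) as [-> E] by (destruct x, y; split; auto; lia).
  f_equal. apply IH; auto.
Qed.

Definition code (phi : formula) m r c := enc (map (bsat m r c) (clos phi)).

Lemma code_lt phi m r c : code phi m r c < 2 ^ List.length (clos phi).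
Proof. unfold code. rewrite <- (length_map (bsat m r c)). apply enc_lt. Qed.

Lemma map_eq_in {A B} (f g : A -> B) l x : map f l = map g l -> In x l -> f x = g x.
Proof.
  induction l as [|y l IH]; simpl; intros E H; [tauto|].
  inversion E. destruct H as [<-|H]; auto.
Qed.

Lemma code_eq phi m r c r' c' ps : code phi m r c = code phi m r' c' -> In ps (clos phi) ->
  (sat m r c ps <-> sat m r' c' ps).
Proof.
  unfold code. intros E Hin. apply enc_inj in E; [|rewrite !length_map; auto].
  pose proof (map_eq_in _ _ _ _ E Hin) as E'. unfold bsat in E'.
  destruct (excluded_middle_informative (sat m r c ps));
  destruct (excluded_middle_informative (sat m r' c' ps)); try discriminate; tauto.
Qed.


Section Truth.
Variables (phi : formula) (xi eta : model) (rho : nat -> nat) (col : nat -> nat -> nat).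
Let X a b f := sat xi (rho a) (col a b) f.
Let Sub f := In f (subs phi).
Hypothesis HV : forall a b p, eta a b p = xi (rho a) (col a b) p.
Hypothesis HN : forall a b f, Sub (Next1 f) -> (X a b (Next1 f) <-> X a (S b) f).
Hypothesis HU : forall a b f g, Sub (Until1 f g) ->
  (X a b (Until1 f g) <-> X a b g \/ (X a b f /\ X a (S b) (Until1 f g))).
Hypothesis HUO : forall a b f g, Sub (UntilOmega f g) ->
  (X a b (UntilOmega f g) <-> X a b g \/ (X a b f /\ X a (S b) (UntilOmega f g))).
Hypothesis HO : forall a b f, Sub (NextOmega f) -> (X a b (NextOmega f) <-> X (S a) 0 f).
Hypothesis HE1 : forall a b f g, Sub (Until1 f g) -> X a b (Until1 f g) -> exists k, X a (b + k) g.
Hypothesis HA : forall a b f g, Sub (UntilOmega f g) -> X a b (UntilOmega f g) ->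
  (forall k, ~ X a (b + k) g) -> X (S a) 0 (UntilOmega f g).
Hypothesis HB : forall a b f g, Sub (UntilOmega f g) -> (forall k, X a (b + k) f) ->
  X (S a) 0 (UntilOmega f g) -> X a b (UntilOmega f g).
Hypothesis HEO : forall a b f g, Sub (UntilOmega f g) -> X a b (UntilOmega f g) ->
  exists s1 s2, lex_le a b s1 s2 /\ X s1 s2 g.

Lemma truth : forall f, Sub f -> forall a b, sat eta a b f <-> X a b f.
Proof.
  induction f as [n|f IH|f IH|f IH|f1 IH1 f2 IH2|f1 IH1 f2 IH2|f1 IH1 f2 IH2]; intros Hs a b.
  - unfold X. simpl. rewrite HV. tauto.
  - assert (Sub f) by (unfold Sub in *; subkid phi Hs). unfold X in *. simpl. rewrite IH; tauto.
  - assert (Sub f) by (unfold Sub in *; subkid phi Hs). rewrite (HN a b f Hs).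
    cbn [sat]. apply IH; auto.
  - assert (Sub f) by (unfold Sub in *; subkid phi Hs). rewrite (HO a b f Hs).
    cbn [sat]. apply IH; auto.
  - assert (Sub f1) by (unfold Sub in *; subkid phi Hs).
    assert (Sub f2) by (unfold Sub in *; subkid phi Hs).
    unfold X in *. simpl. rewrite IH1, IH2 by auto. tauto.
  - assert (S1 : Sub f1) by (unfold Sub in *; subkid phi Hs).
    assert (S2 : Sub f2) by (unfold Sub in *; subkid phi Hs).
    split.
    + cbn [sat]. intros [k [Hk Hi]].
      assert (G : forall k b, X a (b + k) f2 -> (forall i, i < k -> X a (b + i) f1) -> X a b (Until1 f1 f2)).
      { induction k0 as [|k0 IHk]; intros b0 Hb Hi0.
        - apply HU; auto. left. rewrite Nat.add_0_r in Hb. auto.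
        - apply HU; auto. right. split.
          + specialize (Hi0 0 ltac:(lia)). rewrite Nat.add_0_r in Hi0. auto.
          + apply IHk.
            * replace (S b0 + k0) with (b0 + S k0) by lia. auto.
            * intros i Hi'. replace (S b0 + i) with (b0 + S i) by lia. apply Hi0. lia. }
      apply (G k b).
      * apply IH2; auto.
      * intros i Hi'. apply IH1; auto.
    + intro Hx. destruct (HE1 a b f1 f2 Hs Hx) as [k Hk].
      revert b Hx Hk. induction k as [|k IHk]; intros b0 Hx Hk.
      * cbn [sat]. exists 0. split; [apply IH2; auto|intros; lia].
      * destruct (classic (X a b0 f2)) as [Hb|Hb].
        { cbn [sat]. exists 0. split; [rewrite Nat.add_0_r; apply IH2; auto|intros; lia]. }
        apply HU in Hx; auto. destruct Hx as [Hx|[Hf1 Hx]]; [contradiction|].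
        assert (Hk' : X a (S b0 + k) f2) by (replace (S b0 + k) with (b0 + S k) by lia; auto).
        destruct (IHk (S b0) Hx Hk') as [k' [Hk1 Hk2]].
        exists (S k'). split.
        { replace (b0 + S k') with (S b0 + k') by lia. auto. }
        intros i Hi. destruct i as [|i].
        { rewrite Nat.add_0_r. apply IH1; auto. }
        replace (b0 + S i) with (S b0 + i) by lia. apply Hk2. lia.
  - assert (S1 : Sub f1) by (unfold Sub in *; subkid phi Hs).
    assert (S2 : Sub f2) by (unfold Sub in *; subkid phi Hs).
    split.
    + cbn [sat]. intros [s1 [s2 [Hle [Hb Hbt]]]].
      assert (RowF : forall r e b, X r (b + e) f2 -> (forall i, i < e -> X r (b + i) f1) ->
                X r b (UntilOmega f1 f2)).
      { intros r e. induction e as [|e IHe]; intros b0 H1 H2.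
        - apply HUO; auto. left. rewrite Nat.add_0_r in H1. auto.
        - apply HUO; auto. right. split.
          + specialize (H2 0 ltac:(lia)). rewrite Nat.add_0_r in H2. auto.
          + apply IHe.
            * replace (S b0 + e) with (b0 + S e) by lia. auto.
            * intros i Hi'. replace (S b0 + i) with (b0 + S i) by lia. apply H2. lia. }
      apply IH2 in Hb; auto.
      assert (G : forall d a b, s1 = a + d -> lex_le a b s1 s2 ->
                (forall t1 t2, lex_le a b t1 t2 -> (t1 < s1 \/ (t1 = s1 /\ t2 < s2)) -> X t1 t2 f1) ->
                X a b (UntilOmega f1 f2)).
      { induction d as [|d IHd]; intros a0 b0 Hd Hl Hbet.
        - rewrite Nat.add_0_r in Hd. subst a0. unfold lex_le in Hl.
          apply (RowF s1 (s2 - b0)).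
          + replace (b0 + (s2 - b0)) with s2 by lia. auto.
          + intros i Hi. apply Hbet; unfold lex_le; lia.
        - apply HB; auto.
          + intro k. apply Hbet; unfold lex_le; lia.
          + apply IHd.
            * lia.
            * unfold lex_le in *; lia.
            * intros t1 t2 H1 H2. apply Hbet; unfold lex_le in *; lia. }
      apply (G (s1 - a) a b); auto.
      * unfold lex_le in Hle; lia.
      * intros t1 t2 H1 H2. apply IH1; auto.
    + intro Hx. destruct (HEO a b f1 f2 Hs Hx) as [s1 [s2 [Hle Hb]]].
      assert (RowB : forall r e b, X r b (UntilOmega f1 f2) -> X r (b + e) f2 ->
                sat eta r b (UntilOmega f1 f2)).
      { intros r e. induction e as [|e IHe]; intros b0 H1 H2.
        - cbn [sat]. exists r, b0. split; [unfold lex_le; lia|]. split.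
          + rewrite Nat.add_0_r in H2. apply IH2; auto.
          + intros t1 t2 Ha Hb'. unfold lex_le in Ha. lia.
        - destruct (classic (X r b0 f2)) as [Hb'|Hb'].
          + cbn [sat]. exists r, b0. split; [unfold lex_le; lia|]. split.
            * apply IH2; auto.
            * intros t1 t2 Ha Hb''. unfold lex_le in Ha. lia.
          + apply HUO in H1; auto. destruct H1 as [H1|[Hf1 H1]]; [contradiction|].
            assert (H2' : X r (S b0 + e) f2) by (replace (S b0 + e) with (b0 + S e) by lia; auto).
            destruct (IHe (S b0) H1 H2') as [u1 [u2 [Hu [Hu2 Hu3]]]].
            exists u1, u2. split; [unfold lex_le in *; lia|]. split; auto.
            intros t1 t2 Ht1 Ht2.
            destruct (classic (t1 = r /\ t2 = b0)) as [[-> ->]|Hne].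
            * apply IH1; auto.
            * apply Hu3; auto. unfold lex_le in *; lia. }
      assert (G : forall d a b, s1 = a + d -> lex_le a b s1 s2 -> X a b (UntilOmega f1 f2) ->
                sat eta a b (UntilOmega f1 f2)).
      { induction d as [|d IHd]; intros a0 b0 Hd Hl Hx0.
        - rewrite Nat.add_0_r in Hd. subst a0. unfold lex_le in Hl.
          apply (RowB s1 (s2 - b0)); auto.
          replace (b0 + (s2 - b0)) with s2 by lia. auto.
        - destruct (classic (exists k, X a0 (b0 + k) f2)) as [[k Hk]|Hno].
          + apply (RowB a0 k); auto.
          + assert (Hn : forall k, ~ X a0 (b0 + k) f2) by (intros k Hk; apply Hno; exists k; auto).
            assert (Hall : forall k, X a0 (b0 + k) (UntilOmega f1 f2)).
            { induction k as [|k IHk]; [rewrite Nat.add_0_r; auto|].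
              apply HUO in IHk; auto. destruct IHk as [IHk|[_ IHk]]; [exfalso; apply (Hn k); auto|].
              replace (b0 + S k) with (S (b0 + k)) by lia. auto. }
            assert (Hf1 : forall k, X a0 (b0 + k) f1).
            { intro k. specialize (Hall k). apply HUO in Hall; auto.
              destruct Hall as [H'|[H' _]]; [exfalso; apply (Hn k); auto|auto]. }
            assert (HS := HA a0 b0 f1 f2 Hs Hx0 Hn).
            destruct (IHd (S a0) 0 ltac:(lia) ltac:(unfold lex_le in *; lia) HS)
              as [u1 [u2 [Hu [Hu2 Hu3]]]].
            cbn [sat]. exists u1, u2. split; [unfold lex_le in *; lia|]. split; auto.
            intros t1 t2 Ht1 Ht2.
            destruct (classic (t1 = a0)) as [->|Hne].
            * apply IH1; auto. unfold lex_le in Ht1.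
              replace t2 with (b0 + (t2 - b0)) by lia. apply Hf1.
            * apply Hu3; auto. unfold lex_le in *; lia. }
      apply (G (s1 - a) a b); auto. unfold lex_le in Hle; lia.
Qed.
End Truth.


Section Main.
Variables (phi : formula) (xi : model).
Definition NN := 2 ^ List.length (clos phi).
Definition cf r x := code phi xi r x.
Definition rf x := code phi xi x 0.
Definition wp r (ps : formula * bool) x : Prop :=
  if snd ps then sat xi r x (fst ps) else ~ sat xi r x (fst ps).

Definition ColProp r c0 (g : nat -> nat) nP nL J : Prop :=
  1 <= nP <= NN /\ 1 <= nL <= (List.length (witc phi) + 1) * NN /\ g 0 = c0 /\
  (forall b, cf r (g (S b)) = cf r (S (g b))) /\ (forall b, nP <= b -> g (b + nL) = g b) /\
  (forall b, nP <= b -> J <= g b) /\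
  (forall ps, In ps (witc phi) -> (exists x, J <= x /\ wp r ps x) ->
     forall b, nP <= b -> exists k, wp r ps (g (b + k))).

Lemma sub_clos f : In f (subs phi) -> In f (clos phi).
Proof. intro; unfold clos; apply in_or_app; auto. Qed.

Lemma col_ex r c0 : exists g nP nL J, ColProp r c0 g nP nL J.
Proof.
  destruct (lasso_exists (cf r) NN (fun x => code_lt phi xi r x)
     (map (wp r) (witc phi))) with (c0 := c0) as [g [nP [nL [J [H1 [H2 [H3 [H4 [H5 [H6 H7]]]]]]]]]].
  - intros P HP x y E. apply in_map_iff in HP. destruct HP as [ps [<- Hps]].
    assert (Hc : In (fst ps) (clos phi)) by (apply sub_clos; apply witc_sub; auto).
    unfold wp. pose proof (code_eq phi xi r x r y (fst ps) E Hc).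
    destruct (snd ps); tauto.
  - exists g, nP, nL, J. rewrite length_map in H2.
    repeat split; auto; try lia.
    intros ps Hps He b Hb. apply (H7 (wp r ps)); auto. apply in_map; auto.
Qed.

Variable t1 : nat.
Definition RowProp (g : nat -> nat) nP nL J : Prop :=
  1 <= nP <= NN /\ 1 <= nL <= (List.length (extras phi) + 1) * NN /\ g 0 = S t1 /\
  (forall b, rf (g (S b)) = rf (S (g b))) /\ (forall b, nP <= b -> g (b + nL) = g b) /\
  (forall b, nP <= b -> J <= g b) /\
  (forall f, In f (extras phi) -> (exists x, J <= x /\ sat xi x 0 f) ->
     forall b, nP <= b -> exists k, sat xi (g (b + k)) 0 f).

Lemma extras_clos f : In f (extras phi) -> In f (clos phi).
Proof. intro; unfold clos; apply in_or_app; auto. Qed.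

Lemma row_ex : exists g nP nL J, RowProp g nP nL J.
Proof.
  destruct (lasso_exists rf NN (fun x => code_lt phi xi x 0)
     (map (fun f x => sat xi x 0 f) (extras phi))) with (c0 := S t1)
     as [g [nP [nL [J [H1 [H2 [H3 [H4 [H5 [H6 H7]]]]]]]]]].
  - intros P HP x y E. apply in_map_iff in HP. destruct HP as [f [<- Hf]].
    pose proof (code_eq phi xi x 0 y 0 f E (extras_clos f Hf)). tauto.
  - exists g, nP, nL, J. rewrite length_map in H2.
    repeat split; auto; try lia.
    intros f Hf He b Hb. apply (H7 (fun x => sat xi x 0 f)); auto.
    apply in_map with (f := fun f x => sat xi x 0 f); auto.
Qed.
End Main.

Lemma bounds phi :
  NN phi <= 2 ^ Defs.length phi /\
  (List.length (witc phi) + 1) * NN phi <= Defs.length phi * 2 ^ Defs.length phi /\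
  (List.length (extras phi) + 1) * NN phi <= Defs.length phi * 2 ^ Defs.length phi.
Proof.
  pose proof (len_eq phi). pose proof (extras_len phi). pose proof (witc_len phi).
  assert (1 <= List.length (subs phi)) by (destruct phi; simpl; lia).
  assert (Hc : List.length (clos phi) <= Defs.length phi) by (unfold clos; rewrite length_app; lia).
  assert (HN : NN phi <= 2 ^ Defs.length phi) by (apply Nat.pow_le_mono_r; lia).
  split; auto. split; apply Nat.mul_le_mono; lia.
Qed.

Require Import Defs.

Theorem mainTheorem16 (phi : formula) (xi : model) (t1 t2 : nat)
  (H : sat xi t1 t2 phi) :
  exists (eta : model) (k m : nat) (l n : nat -> nat),
    0 < k /\ 0 < m /\
    (forall i, 1 <= i <= k + m -> 0 < l i /\ 0 < n i) /\
    sat eta 0 0 phi /\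
    (forall i j p, k < i -> eta i j p = eta (i + m) j p) /\
    (forall i j p, 1 <= i <= k + m -> l i < j -> eta i j p = eta i (j + n i) p) /\
    (m <= length phi * 2 ^ length phi /\
     forall i, 1 <= i <= m -> n i <= length phi * 2 ^ length phi) /\
    (k <= 2 ^ length phi /\
     forall i, 1 <= i <= k + m -> l i <= 2 ^ length phi).
Proof.
  destruct (row_ex phi xi t1) as [rg [rP [rL [rJ RP]]]].
  destruct RP as [RP1 [RP2 [RP3 [RP4 [RP5 [RP6 RP7]]]]]].
  assert (CS : forall rc : nat * nat, exists t : (nat -> nat) * nat * nat * nat,
    ColProp phi xi (fst rc) (snd rc) (fst (fst (fst t))) (snd (fst (fst t))) (snd (fst t)) (snd t)).
  { intros [r c]. destruct (col_ex phi xi r c) as [g [nP [nL [J HC]]]].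
    exists (g, nP, nL, J). exact HC. }
  pose (cs := fun rc => proj1_sig (constructive_indefinite_description _ (CS rc))).
  assert (CSP : forall r c, ColProp phi xi r c (fst (fst (fst (cs (r, c))))) (snd (fst (fst (cs (r, c)))))
                   (snd (fst (cs (r, c)))) (snd (cs (r, c)))).
  { intros r c. exact (proj2_sig (constructive_indefinite_description _ (CS (r, c)))). }
  clearbody cs. clear CS.
  pose (rho := fun a => match a with 0 => t1 | S a' => rg a' end).
  pose (c0 := fun a => match a with 0 => t2 | S _ => 0 end).
  pose (col := fun a => fst (fst (fst (cs (rho a, c0 a))))).
  pose (nPc := fun a => snd (fst (fst (cs (rho a, c0 a))))).
  pose (nLc := fun a => snd (fst (cs (rho a, c0 a)))).
  pose (Jc := fun a => snd (cs (rho a, c0 a))).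
  assert (CP : forall a, ColProp phi xi (rho a) (c0 a) (col a) (nPc a) (nLc a) (Jc a)).
  { intro a. apply CSP. }
  assert (Hcol : forall a a', rho a = rho a' -> c0 a = c0 a' -> col a = col a').
  { intros a a' E1 E2. unfold col. rewrite E1, E2. reflexivity. }
  clearbody col nPc nLc Jc.
  pose (eta := fun a b p => xi (rho a) (col a b) p).
  pose proof (bounds phi) as [B1 [B2 B3]].
  assert (Hcs : forall a b f, In f (clos phi) ->
     (sat xi (rho a) (col a (S b)) f <-> sat xi (rho a) (S (col a b)) f)).
  { intros a b f Hf. destruct (CP a) as [_ [_ [_ [C4 _]]]].
    apply (code_eq phi xi _ _ _ _ f (C4 b) Hf). }
  assert (Hrs : forall a f, In f (clos phi) ->
     (sat xi (rho (S a)) 0 f <-> sat xi (S (rho a)) 0 f)).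
  { intros a f Hf. destruct a as [|a].
    - simpl. rewrite RP3. tauto.
    - simpl. apply (code_eq phi xi _ _ _ _ f (RP4 a) Hf). }
  assert (Hc0 : forall a, col (S a) 0 = 0).
  { intro a. destruct (CP (S a)) as [_ [_ [C3 _]]]. auto. }
  assert (HUc : forall a b f g, In (Until1 f g) (clos phi) ->
    (sat xi (rho a) (col a b) (Until1 f g) <-> sat xi (rho a) (col a b) g \/
      (sat xi (rho a) (col a b) f /\ sat xi (rho a) (col a (S b)) (Until1 f g)))).
  { intros a b f g Hf. rewrite Hcs by auto. apply u_unfold. }
  assert (HUOc : forall a b f g, In (UntilOmega f g) (subs phi) ->
    (sat xi (rho a) (col a b) (UntilOmega f g) <-> sat xi (rho a) (col a b) g \/
      (sat xi (rho a) (col a b) f /\ sat xi (rho a) (col a (S b)) (UntilOmega f g)))).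
  { intros a b f g Hf. rewrite Hcs by (apply sub_clos; auto). apply U_unfold. }
  assert (HE1 : forall a b f g, In (Until1 f g) (clos phi) ->
    sat xi (rho a) (col a b) (Until1 f g) -> exists k, sat xi (rho a) (col a (b + k)) g).
  { intros a b f g Hf Hx. apply NNPP. intro Hno.
    assert (Hn : forall k, ~ sat xi (rho a) (col a (b + k)) g) by (intros k Hk; apply Hno; exists k; auto).
    assert (Hall : forall k, sat xi (rho a) (col a (b + k)) (Until1 f g)).
    { induction k as [|k IHk]; [rewrite Nat.add_0_r; auto|].
      apply HUc in IHk; auto. destruct IHk as [IHk|[_ IHk]]; [exfalso; apply (Hn k); auto|].
      replace (b + S k) with (S (b + k)) by lia. auto. }
    destruct (CP a) as [_ [_ [_ [_ [_ [C6 C7]]]]]].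
    specialize (Hall (nPc a)). cbn [sat] in Hall. destruct Hall as [k' [Hk' _]].
    destruct (C7 (g, true) (clos_u phi f g Hf)) with (b := b + nPc a) as [k Hk].
    + exists (col a (b + nPc a) + k'). split; [specialize (C6 (b + nPc a) ltac:(lia)); lia|]. exact Hk'.
    + lia.
    + apply (Hn (nPc a + k)). unfold wp in Hk. simpl in Hk. replace (b + (nPc a + k)) with (b + nPc a + k) by lia. auto. }
  assert (HA : forall a b f g, In (UntilOmega f g) (subs phi) ->
    sat xi (rho a) (col a b) (UntilOmega f g) -> (forall k, ~ sat xi (rho a) (col a (b + k)) g) ->
    sat xi (rho (S a)) (col (S a) 0) (UntilOmega f g)).
  { intros a b f g Hf Hx Hn.
    assert (Hall : forall k, sat xi (rho a) (col a (b + k)) (UntilOmega f g)).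
    { induction k as [|k IHk]; [rewrite Nat.add_0_r; auto|].
      apply HUOc in IHk; auto. destruct IHk as [IHk|[_ IHk]]; [exfalso; apply (Hn k); auto|].
      replace (b + S k) with (S (b + k)) by lia. auto. }
    destruct (CP a) as [_ [_ [_ [_ [_ [C6 C7]]]]]].
    destruct (wit_U phi f g Hf) as [W1 [W2 W3]].
    assert (Hng : forall x, Jc a <= x -> ~ sat xi (rho a) x g).
    { intros x Hx' Hg. destruct (C7 (g, true) W1) with (b := b + nPc a) as [k Hk].
      - exists x. split; auto.
      - lia.
      - apply (Hn (nPc a + k)). unfold wp in Hk. simpl in Hk.
        replace (b + (nPc a + k)) with (b + nPc a + k) by lia. auto. }
    specialize (Hall (nPc a)). specialize (C6 (b + nPc a) ltac:(lia)).
    rewrite Hc0. apply Hrs; [apply sub_clos; auto|].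
    cbn [sat] in Hall |- *. destruct Hall as [s1 [s2 [Hle [Hs Hbet]]]].
    assert (s1 <> rho a).
    { intro E. subst s1. unfold lex_le in Hle. apply (Hng s2); [lia|auto]. }
    exists s1, s2. split; [unfold lex_le in *; lia|]. split; auto.
    intros t3 t4 Ht1 Ht2. apply Hbet; auto. unfold lex_le in *; lia. }
  assert (HB : forall a b f g, In (UntilOmega f g) (subs phi) ->
    (forall k, sat xi (rho a) (col a (b + k)) f) ->
    sat xi (rho (S a)) (col (S a) 0) (UntilOmega f g) -> sat xi (rho a) (col a b) (UntilOmega f g)).
  { intros a b f g Hf Hall Hx.
    destruct (CP a) as [_ [_ [_ [_ [_ [C6 C7]]]]]].
    destruct (wit_U phi f g Hf) as [W1 [W2 W3]].
    assert (Hpf : forall x, Jc a <= x -> sat xi (rho a) x f).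
    { intros x Hx'. apply NNPP. intro Hnf. destruct (C7 (f, false) W2) with (b := b + nPc a) as [k Hk].
      - exists x. split; auto.
      - lia.
      - unfold wp in Hk. simpl in Hk. apply Hk.
        replace (b + nPc a + k) with (b + (nPc a + k)) by lia. auto. }
    rewrite Hc0 in Hx. apply Hrs in Hx; [|apply sub_clos; auto].
    assert (Hloop : sat xi (rho a) (col a (b + nPc a)) (UntilOmega f g)).
    { specialize (C6 (b + nPc a) ltac:(lia)).
      cbn [sat] in Hx |- *. destruct Hx as [s1 [s2 [Hle [Hs Hbet]]]].
      exists s1, s2. split; [unfold lex_le in *; lia|]. split; auto.
      intros t3 t4 Ht1 Ht2. destruct (classic (t3 = rho a)) as [->|Hne].
      - apply Hpf. unfold lex_le in Ht1. lia.
      - apply Hbet; auto. unfold lex_le in *; lia. }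
    clear -Hloop HUOc Hall Hf. revert b Hloop Hall. induction (nPc a) as [|k IHk]; intros b Hl Hall.
    - rewrite Nat.add_0_r in Hl. auto.
    - apply HUOc; auto. right. split.
      + specialize (Hall 0). rewrite Nat.add_0_r in Hall. auto.
      + apply IHk.
        * replace (S b + k) with (b + S k) by lia. auto.
        * intro k0. replace (S b + k0) with (b + S k0) by lia. auto. }
  assert (HEO : forall a b f g, In (UntilOmega f g) (subs phi) ->
    sat xi (rho a) (col a b) (UntilOmega f g) ->
    exists s1 s2, lex_le a b s1 s2 /\ sat xi (rho s1) (col s1 s2) g).
  { intros a b f g Hf Hx. apply NNPP. intro Hno.
    assert (Step : forall a' b', lex_le a b a' b' -> sat xi (rho a') (col a' b') (UntilOmega f g) ->
               sat xi (rho (S a')) (col (S a') 0) (UntilOmega f g)).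
    { intros a' b' Hl Hx'. apply (HA a' b' f g Hf Hx'). intros k Hk. apply Hno.
      exists a', (b' + k). split; auto. unfold lex_le in *; lia. }
    assert (Hall : forall d, sat xi (rho (S (a + d))) (col (S (a + d)) 0) (UntilOmega f g)).
    { induction d as [|d IHd].
      - rewrite Nat.add_0_r. apply (Step a b); auto. unfold lex_le; lia.
      - replace (a + S d) with (S (a + d)) by lia. apply (Step (S (a + d)) 0); auto.
        unfold lex_le; lia. }
    specialize (Hall rP). rewrite Hc0 in Hall. simpl in Hall.
    specialize (RP6 (a + rP) ltac:(lia)).
    cbn [sat] in Hall. destruct Hall as [s1 [s2 [Hle [Hs Hbet]]]].
    destruct (wit_U phi f g Hf) as [W1 [W2 W3]].
    destruct (RP7 (Until1 f g) W3) with (b := a + rP) as [k Hk].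
    { exists s1. split; [unfold lex_le in *; lia|]. cbn [sat]. exists s2. split; [auto|].
      intros i Hi. apply Hbet; unfold lex_le in *; lia. }
    { lia. }
    assert (Hk' : sat xi (rho (S (a + rP + k))) (col (S (a + rP + k)) 0) (Until1 f g)).
    { rewrite Hc0. simpl. auto. }
    destruct (HE1 _ _ f g (extras_clos phi _ W3) Hk') as [k' Hk''].
    apply Hno. exists (S (a + rP + k)), (0 + k'). split; [unfold lex_le; lia|auto]. }
  assert (Htruth := truth phi xi eta rho col (fun a b p => eq_refl)).
  specialize (Htruth (fun a b f Hf => ltac:(cbn [sat]; rewrite Hcs; [tauto|apply sub_clos; subkid phi Hf]))).
  specialize (Htruth (fun a b f g Hf => HUc a b f g (sub_clos phi _ Hf)) HUOc).
  specialize (Htruth (fun a b f Hf => ltac:(cbn [sat]; rewrite Hc0; symmetry; apply Hrs; apply sub_clos; subkid phi Hf))).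
  specialize (Htruth (fun a b f g Hf => HE1 a b f g (sub_clos phi _ Hf)) HA HB HEO).
  exists eta, rP, rL, nPc, nLc.
  split; [lia|]. split; [lia|]. split.
  { intros i Hi. destruct (CP i) as [C1 [C2 _]]. lia. } split.
  { apply Htruth; [apply subs_self|]. simpl.
    destruct (CP 0) as [_ [_ [C3 _]]]. rewrite C3. simpl. auto. } split.
  { intros i j p Hi. destruct i as [|a]; [lia|]. unfold eta.
    replace (S a + rL) with (S (a + rL)) by lia.
    assert (E : rho (S (a + rL)) = rho (S a)) by (simpl; apply RP5; lia).
    assert (Ec : forall x, col (S (a + rL)) x = col (S a) x).
    { intro x. rewrite (Hcol (S (a + rL)) (S a) E eq_refl). auto. }
    rewrite Ec, E. auto. } split.
  { intros i j p Hi Hj. unfold eta. destruct (CP i) as [_ [_ [_ [_ [C5 _]]]]].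
    rewrite C5 by lia. auto. } split.
  { split; [lia|]. intros i Hi. destruct (CP i) as [_ [C2 _]]. lia. }
  split; [lia|]. intros i Hi. destruct (CP i) as [C1 _]. lia.
Qed.
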